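(* Let $K\ge 2$, let $\mathcal{C}_1,\dots,\mathcal{C}_K$ be a partition of $\mathcal{V}=\{v_1,\dots,v_N\}$ into sets of size $N/K$, and let $\mathcal{R}$ satisfy Assumption 1. Then the all-ones vector $\mathbf{1}\in\mathbb{R}^N$ is an eigenvector of $\mathbf{R}$ with eigenvalue $d$. For $k\in[K-1]$ define $\mathbf{u}_k\in\mathbb{R}^N$ by $u_{ki}=1$ if $v_i\in\mathcal{C}_k$ and $u_{ki}=-\frac1{K-1}$ otherwise. Then $\mathbf{1},\mathbf{u}_1,\dots,\mathbf{u}_{K-1}$ lie in the null space of $\mathbf{R}\left(\mathbf{I}-\frac1N\mathbf{1}\mathbf{1}^\intercal\right)$ and are linearly independent.
   Context: $\mathcal{R}$ is an undirected graph on $\mathcal{V}$ with symmetric adjacency $\mathbf{R}\in\{0,1\}^{N\times N}$. Assumption 1: $\mathcal{R}$ is $d$-regular for some $K\le d\le N$, $R_{ii}=1$ for all $i$ (self-loops counted in the degree), and each node is adjacent in $\mathcal{R}$ to exactly $d/K$ nodes of $\mathcal{C}_k$ for every $k\in[K]$ (including the self-loop). *)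

(* Defs.v *)
From HB Require Import structures.
From mathcomp Require Import all_boot all_order all_algebra.
Set Implicit Arguments. Unset Strict Implicit. Unset Printing Implicit Defensive.
Import Order.TTheory GRing.Theory Num.Theory.
Local Open Scope ring_scope.

(* Nodes v_1..v_N are 'I_N; clusters C_1..C_K are indexed by 'I_K (0-based);
   the partition is given by the cluster-assignment map c : 'I_N -> 'I_K,
   C_k = [set i | c i == k]. *)
Definition cluster (N K : nat) (c : 'I_N -> 'I_K) (k : 'I_K) : {set 'I_N} :=
  [set i | c i == k].

Definition ones (F : nzRingType) (N : nat) : 'cV[F]_N := const_mx 1.

(* u_k (cluster index k as a nat, 0-based):
   u_{k,i} = 1 if v_i in C_k, and -1/(K-1) otherwise. *)
Definition uvec (F : fieldType) (N K : nat) (c : 'I_N -> 'I_K) (k : nat)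
  : 'cV[F]_N :=
  \col_i (if nat_of_ord (c i) == k then 1 else - (K.-1%:R)^-1).

(* Assumption 1 on the adjacency matrix A (= bold R). *)
Definition assumption1 (F : nzRingType) (N K d : nat) (c : 'I_N -> 'I_K)
  (A : 'M[F]_N) : Prop :=
  (forall i j, A i j = 0 \/ A i j = 1) /\
  (forall i j, A i j = A j i) /\
  (K <= d <= N)%N /\
  (forall i, \sum_j A i j = d%:R) /\
  (forall i, A i i = 1) /\
  (K %| d)%N /\
  (forall i (k : 'I_K),
      #|[set j in cluster c k | A i j == 1]| = (d %/ K)%N).

(* Main.v *)
Require Import Defs.
From HB Require Import structures.
From mathcomp Require Import all_boot all_order all_algebra.
From mathcomp Require Import zify ring.
Import Order.TTheory GRing.Theory Num.Theory.
Local Open Scope ring_scope.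

Lemma Pv (F : realFieldType) N (v : 'cV[F]_N) :
  (1%:M - (N%:R)^-1 *: (ones F N *m (ones F N)^T)) *m v
  = v - ((N%:R)^-1 * \sum_j v j 0) *: ones F N.
Proof.
apply/matrixP => i j; rewrite ord1 !mxE.
rewrite (bigD1 i) //= !mxE eqxx /=.
rewrite (eq_bigr (fun k => - ((N%:R)^-1 * v k 0))); last first.
  move=> k /negbTE ki; rewrite !mxE eq_sym ki /= (eq_bigr (fun _ => 1)).
    by rewrite big_ord1; ring.
  by move=> l _; rewrite !mxE mulr1.
rewrite (eq_bigr (fun _ => 1) (P := xpredT)); last by move=> l _; rewrite !mxE mulr1.
rewrite big_ord1.
rewrite [\sum_j v j 0](bigD1 i) //= sumrN -mulr_sumr; ring.
Qed.

Lemma sum_ind1 (F : realFieldType) n (y : 'I_n -> F) (i0 : 'I_n) :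
  \sum_(i < n) y i * ((i0 == i :> nat)%:R) = y i0.
Proof.
rewrite (bigD1 i0) //= eqxx mulr1 big1 ?addr0 // => i ni.
case: eqP => [e|]; last by rewrite mulr0.
by case/eqP: ni; apply/val_inj; rewrite /= e.
Qed.

Lemma sum_ind0 (F : realFieldType) n (y : 'I_n -> F) (m : nat) :
  (n <= m)%N -> \sum_(i < n) y i * ((m == i :> nat)%:R) = 0.
Proof.
move=> h; rewrite big1 // => i _; case: eqP => [e|]; last by rewrite mulr0.
by move: (ltn_ord i); rewrite -e ltnNge h.
Qed.

Theorem lemma3 (F : realFieldType) (N K d : nat) (c : 'I_N -> 'I_K)
  (A : 'M[F]_N) :
  (2 <= K)%N ->
  (K %| N)%N ->
  (forall k : 'I_K, #|cluster c k| = (N %/ K)%N) ->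
  assumption1 d c A ->
  [/\ ones F N != 0,
      A *m ones F N = d%:R *: ones F N,
      A *m (1%:M - (N%:R)^-1 *: (ones F N *m (ones F N)^T)) *m ones F N = 0,
      (forall k : nat, (k < K.-1)%N ->
         A *m (1%:M - (N%:R)^-1 *: (ones F N *m (ones F N)^T))
           *m uvec F c k = 0) &
      free (ones F N :: [seq uvec F c k | k <- iota 0 K.-1])].
Proof.
move=> K2 KN Ccard [A01 [Asym [/andP[Kd dN] [Asum [Adiag [Kdvd Acard]]]]]].
have N0 : (0 < N)%N by lia.
have NF : N%:R != 0 :> F by rewrite pnatr_eq0 -lt0n.
case: K K2 KN c Ccard Kdvd Acard Kd => [|[|K']] // _ KN c Ccard Kdvd Acard Kd.
set b : F := ((K'.+2).-1%:R)^-1.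
have bE : b = (K'.+1%:R)^-1 by []. clearbody b.
have Kb : K'.+1%:R != 0 :> F by rewrite pnatr_eq0.
have b1 : 1 + b != 0.
  by rewrite gt_eqF // ltr_pwDl // bE invr_ge0 ler0n.
have uE : forall k i, uvec F c k i 0 = (1 + b) * ((c i == k :> nat)%:R) - b.
  by move=> k i; rewrite mxE bE; case: eqP => _ /=; ring.
have Pu : forall k, (k < K'.+1)%N ->
   (1%:M - (N%:R)^-1 *: (ones F N *m (ones F N)^T)) *m uvec F c k = uvec F c k.
  move=> k kK; rewrite Pv.
  have -> : \sum_j uvec F c k j 0 = 0.
    rewrite (eq_bigr _ (fun i _ => uE k i)) sumrB -mulr_sumr sumr_const card_ord.
    have kK2 : (k < K'.+2)%N by lia.
    have -> : \sum_(i < N) ((c i == k :> nat)%:R : F) = (N %/ K'.+2)%:R.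
      rewrite -(Ccard (Ordinal kK2)) -sum1_card natr_sum big_mkcond /=.
      rewrite [RHS]big_mkcond /=; apply: eq_bigr => i _; rewrite /cluster inE -(inj_eq val_inj) /=; by case: ifP.
    have {2}-> : N = ((N %/ K'.+2) * K'.+2)%N by rewrite divnK.
    have e : (K'.+2%:R : F) = 1 + K'.+1%:R by rewrite mulrS.
    rewrite -mulr_natl mulr1 -[b *+ _]mulr_natr natrM e bE; field.
    by rewrite -mulrS pnatr_eq0.
  by rewrite mulr0 scale0r subr0.
have Aones : A *m ones F N = d%:R *: ones F N.
  apply/matrixP => i j; rewrite !mxE (eq_bigr (fun k => A i k)) ?Asum ?mulr1 //.
  by move=> k _; rewrite mxE mulr1.
split => //.
- apply/eqP => /matrixP /(_ (Ordinal N0) 0); rewrite !mxE => /eqP; by rewrite oner_eq0.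
- rewrite -mulmxA Pv.
  rewrite (eq_bigr (fun _ => 1)); last by move=> i _; rewrite mxE.
  rewrite sumr_const card_ord mulVf ?scale1r ?subrr ?mulmx0 //.
- move=> k kK; rewrite -mulmxA Pu //.
  apply/matrixP => i j; rewrite ord1 !mxE.
  rewrite (eq_bigr (fun j => (1 + b) * (A i j * (c j == k :> nat)%:R) - b * A i j));
    last by move=> l _; rewrite uE; ring.
  rewrite sumrB -!mulr_sumr Asum.
  have kK2 : (k < K'.+2)%N by lia.
  have -> : \sum_j (A i j * ((c j == k :> nat)%:R) : F) = (d %/ K'.+2)%:R.
    rewrite -(Acard i (Ordinal kK2)) -sum1_card natr_sum [RHS]big_mkcond /=.
    apply: eq_bigr => l _; rewrite inE /cluster inE -(inj_eq val_inj) /=.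
    case: (A01 i l) => ->; rewrite ?eqxx; case: (_ == _) => //=; rewrite ?mulr1 ?mulr0 //.
    by rewrite eq_sym oner_eq0.
  have {2}-> : d = ((d %/ K'.+2) * K'.+2)%N by rewrite divnK.
  have e : (K'.+2%:R : F) = 1 + K'.+1%:R by rewrite mulrS.
  rewrite natrM e bE; field.
  by rewrite -mulrS pnatr_eq0.
change (free (ones F N :: [seq uvec F c k | k <- iota 0 K'.+1])).
have hs : size (ones F N :: [seq uvec F c k | k <- iota 0 K'.+1]) == K'.+2.
  by rewrite /= size_map size_iota.
apply/(@freeP _ _ _ (Tuple hs)) => x hx.
have rep : forall j : 'I_K'.+2, exists r, c r = j.
  move=> j; have : (0 < #|cluster c j|)%N.
    by rewrite Ccard divn_gt0 // dvdn_leq.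
  by case/card_gt0P => r; rewrite inE => /eqP; exists r.
set S := \sum_(i < K'.+1) x (lift ord0 i).
have hv : forall r, x 0 - b * S +
    (1 + b) * \sum_(i < K'.+1) x (lift ord0 i) * ((c r == i :> nat)%:R) = 0.
  move=> r; move/matrixP: hx => /(_ r 0).
  rewrite big_ord_recl !mxE summxE /= => h.
  have e : forall k : 'I_K'.+1,
      (uvec F c 0 :: [seq uvec F c k0 | k0 <- iota 1 K'])`_(0 + k) = uvec F c k.
    move=> k; rewrite add0n.
    rewrite (_ : _ :: _ = [seq uvec F c k0 | k0 <- iota 0 K'.+1]) //.
    by rewrite (nth_map 0) ?size_iota // nth_iota.
  rewrite (eq_bigr (fun k => x (lift ord0 k) * ((1 + b) * ((c r == k :> nat)%:R) - b))) in h;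
    last by move=> k _; rewrite e mxE uE.
  rewrite -[RHS]h mulr1 -addrA; congr (_ + _).
  rewrite /S !mulr_sumr -sumrN -big_split /=; apply: eq_bigr => k _; ring.
have h0 : x 0 - b * S = 0.
  have [r cr] := rep ord_max.
  by move: (hv r); rewrite sum_ind0 ?cr // mulr0 addr0.
have hl : forall i : 'I_K'.+1, x (lift ord0 i) = 0.
  move=> i; have [r cr] := rep (widen_ord (leqnSn _) i).
  move: (hv r); rewrite h0 add0r.
  have -> : (c r : nat) = i by rewrite cr.
  rewrite sum_ind1 => /eqP; rewrite mulf_eq0 (negbTE b1) /= => /eqP //.
have S0 : S = 0 by rewrite /S big1.
have x0 : x 0 = 0 by move: h0; rewrite S0 mulr0 subr0.
by move=> i; case: (unliftP ord0 i) => [j ->|->].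
Qed.
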